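(* Let $D_1$ be an $m\times m$ Euclidean distance matrix (EDM) of embedding dimension $r_1$, and let $D_2$ be an $n\times n$ EDM of embedding dimension $r_2$. Then the $mn\times mn$ matrix $D = E_m\otimes D_2 + D_1\otimes E_n$ is an EDM of embedding dimension $r_1+r_2$, where $E_k$ denotes the $k\times k$ matrix of all ones and $\otimes$ denotes the Kronecker product.
   Context: An $N\times N$ matrix $D=(d_{ij})$ is a Euclidean distance matrix (EDM) if there exist points $p^1,\dots,p^N$ in some Euclidean space $\mathbb{R}^s$ with $d_{ij}=\|p^i-p^j\|^2$ for all $i,j$ (Euclidean norm); the dimension of the affine span of these points is called the embedding dimension of $D$. *)

(* Defs.v *)
From mathcomp Require Import all_boot all_order all_algebra.
Set Implicit Arguments. Unset Strict Implicit. Unset Printing Implicit Defensive.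
Import Order.TTheory GRing.Theory Num.Theory.
Local Open Scope ring_scope.

Definition sqnorm (R : realFieldType) (s : nat) (v : 'rV[R]_s) : R :=
  \sum_(k < s) v 0 k ^+ 2.

(* Points p^1..p^N in R^s are the rows of P : 'M_(N, s).
   The embedding dimension = dimension of the affine span of the points
   = dimension of the linear span of all differences p^i - p^j. *)
Definition affine_dim (R : realFieldType) (N s : nat) (P : 'M[R]_(N, s)) : nat :=
  \rank (\sum_(i < N) \sum_(j < N) <<row i P - row j P>>)%MS.

Definition is_EDM_dim (R : realFieldType) (N : nat) (D : 'M[R]_N) (r : nat) : Prop :=
  exists (s : nat) (P : 'M[R]_(N, s)),
    (forall i j : 'I_N, D i j = sqnorm (row i P - row j P)) /\ affine_dim P = r.

(* Kronecker product, with the standard row-major indexing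
   (i, k) |-> i * n + k (0-based). *)
Lemma kron_hi_proof (m n : nat) (a : 'I_(m * n)) : (a %/ n < m)%N.
Proof. by rewrite ltn_divLR ?(mulnC m) //; case: n a => [|n] [a Ha] //=; rewrite muln0 in Ha. Qed.

Lemma kron_lo_proof (m n : nat) (a : 'I_(m * n)) : (a %% n < n)%N.
Proof. by case: n a => [|n] [a Ha] //=; [rewrite muln0 in Ha | rewrite ltn_mod]. Qed.

Definition kron_hi (m n : nat) (a : 'I_(m * n)) : 'I_m := Ordinal (kron_hi_proof a).
Definition kron_lo (m n : nat) (a : 'I_(m * n)) : 'I_n := Ordinal (kron_lo_proof a).

Definition kron (R : ringType) (m n : nat) (A : 'M[R]_m) (B : 'M[R]_n) : 'M[R]_(m * n) :=
  \matrix_(a, b) (A (kron_hi a) (kron_hi b) * B (kron_lo a) (kron_lo b)).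

Definition ones (R : ringType) (k : nat) : 'M[R]_k := const_mx 1.

(* Main.v *)
Require Import Defs.
From mathcomp Require Import all_boot all_order all_algebra.
From mathcomp Require Import zify.
Set Implicit Arguments. Unset Strict Implicit. Unset Printing Implicit Defensive.
Import Order.TTheory GRing.Theory Num.Theory.
Local Open Scope ring_scope.

Lemma mkidx_proof (m n : nat) (i : 'I_m) (k : 'I_n) : (i * n + k < m * n)%N.
Proof. have := ltn_ord i; have := ltn_ord k; nia. Qed.

Definition mkidx m n (i : 'I_m) (k : 'I_n) : 'I_(m * n) := Ordinal (mkidx_proof i k).

Lemma mkidx_hi m n i k : kron_hi (@mkidx m n i k) = i.
Proof.
apply/val_inj => /=; have kn := ltn_ord k.
rewrite divnMDl ?divn_small ?addn0 //; lia.
Qed.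

Lemma mkidx_lo m n i k : kron_lo (@mkidx m n i k) = k.
Proof. by apply/val_inj => /=; rewrite modnMDl modn_small. Qed.

Lemma sqnorm_row_mx (R : realFieldType) s1 s2 (u : 'rV[R]_s1) (v : 'rV[R]_s2) :
  sqnorm (row_mx u v) = sqnorm u + sqnorm v.
Proof.
rewrite /sqnorm big_split_ord /=.
by congr (_ + _); apply: eq_bigr => i _; rewrite ?row_mxEl ?row_mxEr.
Qed.

Theorem theorem4 (R : realFieldType) (m n : nat) (D1 : 'M[R]_m) (D2 : 'M[R]_n)
    (r1 r2 : nat) :
  (0 < m)%N -> (0 < n)%N ->
  is_EDM_dim D1 r1 -> is_EDM_dim D2 r2 ->
  is_EDM_dim (kron (ones R m) D2 + kron D1 (ones R n)) (r1 + r2).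
Proof.
move=> m0 n0 [s1 [P1 [HD1 Hr1]]] [s2 [P2 [HD2 Hr2]]].
pose A : 'M[R]_(m * n, s1) := \matrix_(a, c) P1 (kron_hi a) c.
pose B : 'M[R]_(m * n, s2) := \matrix_(a, c) P2 (kron_lo a) c.
have rowA a : row a A = row (kron_hi a) P1 by apply/rowP => c; rewrite !mxE.
have rowB a : row a B = row (kron_lo a) P2 by apply/rowP => c; rewrite !mxE.
have rowd a b : row a (row_mx A B) - row b (row_mx A B) =
   row_mx (row (kron_hi a) P1 - row (kron_hi b) P1)
          (row (kron_lo a) P2 - row (kron_lo b) P2).
  by rewrite !row_row_mx rowA rowB rowA rowB opp_row_mx add_row_mx.
exists (s1 + s2)%N, (row_mx A B); split.
  move=> a b; rewrite rowd sqnorm_row_mx -HD1 -HD2 !mxE /ones ?mxE.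
  by rewrite mul1r mulr1 addrC.
rewrite /affine_dim -Hr1 -Hr2 /affine_dim.
set S1 := (\sum_(i < m) _)%MS.
set S2 := (\sum_(i < n) _)%MS.
rewrite -rank_diag_block_mx.
apply: eqmx_rank; apply/andP; split.
- apply/sumsmx_subP => a _; apply/sumsmx_subP => b _; rewrite genmxE rowd.
  have d1S : (row (kron_hi a) P1 - row (kron_hi b) P1 <= S1)%MS.
    by apply: (sumsmx_sup (kron_hi a)) => //; apply: (sumsmx_sup (kron_hi b)) => //; rewrite genmxE.
  have d2S : (row (kron_lo a) P2 - row (kron_lo b) P2 <= S2)%MS.
    by apply: (sumsmx_sup (kron_lo a)) => //; apply: (sumsmx_sup (kron_lo b)) => //; rewrite genmxE.
  move: d1S d2S => /submxP [w1 ->] /submxP [w2 ->].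
  have -> : row_mx (w1 *m S1) (w2 *m S2) = row_mx w1 w2 *m block_mx S1 0 0 S2.
    by rewrite mul_row_block !mulmx0 addr0 add0r.
  exact: submxMl.
- rewrite -[block_mx _ _ _ _]/(col_mx (row_mx S1 0) (row_mx 0 S2)) col_mx_sub.
  apply/andP; split.
  + have -> : row_mx S1 (0 : 'M_(s1, s2)) = S1 *m row_mx 1%:M 0.
      by rewrite mul_mx_row mulmx1 mulmx0.
    rewrite sumsmxMr_gen; apply/sumsmx_subP => i _; rewrite genmxE sumsmxMr_gen.
    apply/sumsmx_subP => j _; rewrite genmxE (eqmxMr _ (genmxE _)).
    rewrite mul_mx_row mulmx1 mulmx0.
    pose k0 : 'I_n := Ordinal n0.
    have := rowd (mkidx i k0) (mkidx j k0).
    rewrite !mkidx_hi !mkidx_lo subrr => <-.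
    apply: (sumsmx_sup (mkidx i k0)) => //; apply: (sumsmx_sup (mkidx j k0)) => //.
    by rewrite genmxE.
  + have -> : row_mx 0 S2 = S2 *m row_mx (0 : 'M_(s2, s1)) 1%:M.
      by rewrite mul_mx_row mulmx1 mulmx0.
    rewrite sumsmxMr_gen; apply/sumsmx_subP => i _; rewrite genmxE sumsmxMr_gen.
    apply/sumsmx_subP => j _; rewrite genmxE (eqmxMr _ (genmxE _)).
    rewrite mul_mx_row mulmx1 mulmx0.
    pose i0 : 'I_m := Ordinal m0.
    have := rowd (mkidx i0 i) (mkidx i0 j).
    rewrite !mkidx_hi !mkidx_lo subrr => <-.
    apply: (sumsmx_sup (mkidx i0 i)) => //; apply: (sumsmx_sup (mkidx i0 j)) => //.
    by rewrite genmxE.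
Qed.
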